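(* Let $\mathcal X=\{X_1,\dots,X_n\}$, $n\in\mathbb N$, be a multi-set of real symmetric $2\times2$ matrices, let $\lambda_1$ be (one of) the largest eigenvalue(s) of all these matrices, attained by $X_1$ with normalised eigenvector $u_1$, and let $v_1\perp u_1$ be a normalised vector. Let $\mathcal V^{\lambda_1}_{\sup}(\mathcal X)$ be the set of unit vectors $v$ such that $Xv=\lambda_1v$ for some $X\in\mathcal X$. Then $$\mathrm{Sup}_{\mathrm{LE}}(\mathcal X)=\begin{cases}\lambda_1I,&\text{if }\lambda_1\text{ is not unique and there is }v\in\mathcal V^{\lambda_1}_{\sup}(\mathcal X)\text{ with }v\neq\pm u_1,\\ \lambda_1u_1u_1^{\mathsf T}+\mu_*v_1v_1^{\mathsf T},&\text{otherwise,}\end{cases}$$ where $\mu_*\le\lambda_1$ is the largest eigenvalue of $\mathcal X$ (other than the occurrence $\lambda_1$ of $X_1$) whose associated eigenvector is not aligned with $u_1$.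
   Context: $I$ is the $2\times2$ identity. Every real symmetric $2\times2$ matrix $X_i$ is written in spectral form $X_i=\lambda_i u_iu_i^{\mathsf T}+\mu_i v_iv_i^{\mathsf T}$ with $\lambda_i\ge\mu_i$ and orthonormal $u_i,v_i$. ''The eigenvalues of $\mathcal X$'' means the multi-set of all $2n$ numbers $\lambda_1,\mu_1,\dots,\lambda_n,\mu_n$, each with its associated eigenvector; an eigenvalue is unique if it occurs exactly once in this multi-set. Two unit vectors are aligned if they are equal up to sign. The log-exp-supremum is $\mathrm{Sup}_{\mathrm{LE}}(\mathcal X):=\lim_{m\to\infty}\frac1m\log\sum_{i=1}^n\exp(mX_i)$ (matrix exponential and logarithm). *)

(* Defs.v *)
From HB Require Import structures.
From mathcomp Require Import all_boot all_order all_algebra.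
From mathcomp Require Import all_classical all_reals all_analysis.
Set Implicit Arguments. Unset Strict Implicit. Unset Printing Implicit Defensive.
Import Order.TTheory GRing.Theory Num.Theory.
Import numFieldNormedType.Exports.
Local Open Scope ring_scope.
Local Open Scope classical_set_scope.

Section Defs.
Variable R : realType.

Definition expm (A : 'M[R]_2) : 'M[R]_2 :=
  limn (series (fun k : nat => (k`!%:R)^-1 *: A ^+ k)).

(* matrix logarithm: the (unique) real symmetric L with exp L = A
   (defined for symmetric positive definite A; junk value 0 otherwise) *)
Definition logm (A : 'M[R]_2) : 'M[R]_2 :=
  xget 0 [set L : 'M[R]_2 | L^T = L /\ expm L = A].

Definition unitv (x : 'cV[R]_2) : Prop := (x^T *m x) = 1.

Definition aligned (x y : 'cV[R]_2) : bool := (x == y) || (x == - y).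

(* the multiset of the 2n eigenvalues: index (i, true) is lambda_i with
   eigenvector u_i, index (i, false) is mu_i with eigenvector v_i *)
Definition eig_val n (lam mu : 'I_n -> R) (k : 'I_n * bool) : R :=
  if k.2 then lam k.1 else mu k.1.
Definition eig_vec n (u v : 'I_n -> 'cV[R]_2) (k : 'I_n * bool) : 'cV[R]_2 :=
  if k.2 then u k.1 else v k.1.

Definition unique_eig n (lam mu : 'I_n -> R) (a : R) : bool :=
  #|[set k | eig_val lam mu k == a]| == 1%N.

(* mu_* : the largest eigenvalue of the multiset, other than the occurrence
   (i0, true) (i.e. lambda of X_1), whose eigenvector is not aligned with u_{i0};
   the occurrence (i0,false) (mu of X_1, eigenvector v_1 orthogonal to u_1)
   always belongs to this set, so it is used as the neutral start value. *)
Definition mu_star n (lam mu : 'I_n -> R) (u v : 'I_n -> 'cV[R]_2) (i0 : 'I_n) : R :=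
  \big[Num.max/mu i0]_(k | (k != (i0, true)) && ~~ aligned (eig_vec u v k) (u i0))
     eig_val lam mu k.

Definition Vsup n (X : 'I_n -> 'M[R]_2) (a : R) : set 'cV[R]_2 :=
  [set w | unitv w /\ exists i, X i *m w = a *: w].

(* the sequence (1/m) log sum_i exp(m X_i) whose limit is Sup_LE *)
Definition supLE_seq n (X : 'I_n -> 'M[R]_2) (m : nat) : 'M[R]_2 :=
  (m%:R)^-1 *: logm (\sum_i expm (m%:R *: X i)).

End Defs.

(* Main.v *)
Require Import Defs.
From HB Require Import structures.
From mathcomp Require Import all_boot all_order all_algebra.
From mathcomp Require Import all_classical all_reals all_analysis.
From mathcomp Require Import ring lra.
Import Order.TTheory GRing.Theory Num.Theory.
Set Implicit Arguments. Unset Strict Implicit. Unset Printing Implicit Defensive.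
Import numFieldNormedType.Exports.
Local Open Scope ring_scope.
Local Open Scope classical_set_scope.
Section S.
Variable R : realType.
Local Notation M2 := 'M[R]_2.
Local Notation V2 := 'cV[R]_2.
Local Notation i0 := (@ord0 1).
Local Notation i1 := (@ord_max 1).

Lemma ord2P (i : 'I_2) : i = i0 \/ i = i1.
Proof. case: i => [[|[|//]] Hi]; [left|right]; exact/val_inj. Qed.

Lemma sum2 (F : 'I_2 -> R) : \sum_(i < 2) F i = F i0 + F i1.
Proof. rewrite big_ord_recl big_ord1; congr (_ + F _); exact/val_inj. Qed.

Lemma mx2_eq (A B : M2) : A i0 i0 = B i0 i0 -> A i0 i1 = B i0 i1 ->
  A i1 i0 = B i1 i0 -> A i1 i1 = B i1 i1 -> A = B.
Proof.
move=> h1 h2 h3 h4; apply/matrixP => i j.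
by case: (ord2P i) => ->; case: (ord2P j) => ->.
Qed.

Lemma mulmx2E m n (A : 'M[R]_(m,2)) (B : 'M[R]_(2,n)) i j :
  (A *m B) i j = A i i0 * B i0 j + A i i1 * B i1 j.
Proof. by rewrite mxE sum2. Qed.

Lemma outerE (x y : V2) i j : (x *m y^T) i j = x i 0 * y j 0.
Proof. by rewrite mxE big_ord1 mxE. Qed.

Definition dot (x y : V2) : R := (x^T *m y) 0 0.

Lemma dotE (x y : V2) : dot x y = x i0 0 * y i0 0 + x i1 0 * y i1 0.
Proof. by rewrite /dot mulmx2E !mxE. Qed.

Lemma dotC (x y : V2) : dot x y = dot y x.
Proof. by rewrite !dotE mulrC [x i1 0 * _]mulrC. Qed.

Lemma unitvP (x : V2) : unitv x -> dot x x = 1.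
Proof. by rewrite /unitv /dot => ->; rewrite mxE. Qed.

Lemma orthP (x y : V2) : x^T *m y = 0 -> dot x y = 0.
Proof. by rewrite /dot => ->; rewrite mxE. Qed.

Lemma unit2 (x : V2) : unitv x -> x i0 0 ^+ 2 + x i1 0 ^+ 2 = 1.
Proof. by move/unitvP; rewrite dotE !expr2. Qed.

Lemma orth2 (a b c d : R) : a^+2 + b^+2 = 1 -> c^+2+d^+2 = 1 -> a*c+b*d = 0 ->
  a^+2 + c^+2 = 1 /\ b^+2 + d^+2 = 1 /\ a * b + c * d = 0.
Proof. move=> h1 h2 h3.
set D := a*d - b*c.
have hD : D^+2 = 1.
  have -> : D^+2 = (a^+2+b^+2)*(c^+2+d^+2) - (a*c+b*d)^+2 by rewrite /D; ring.
  by rewrite h1 h2 h3; ring.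
have e1 : a*D = d.
  apply/eqP; rewrite -subr_eq0; apply/eqP.
  have -> : a*D - d = -b*(a*c+b*d) + d*(a^+2+b^+2 - 1) by rewrite /D; ring.
  by rewrite h3 h1; ring.
have e2 : c*D = -b.
  apply/eqP; rewrite -subr_eq0; apply/eqP.
  have -> : c*D - -b = d*(a*c+b*d) - b*(c^+2+d^+2 - 1) by rewrite /D; ring.
  by rewrite h3 h2; ring.
have e3 : a^+2 + c^+2 = b^+2 + d^+2.
  have -> : a^+2 + c^+2 = (a^+2+c^+2) * D^+2 by rewrite hD mulr1.
  have -> : b^+2 + d^+2 = (c*D)^+2 + (a*D)^+2 by rewrite e1 e2 sqrrN addrC.
  ring.
split; first lra. split; first lra.
have -> : a * b + c * d = a * (- (c * D)) + c * (a * D) by rewrite e1 e2 opprK.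
ring.
Qed.

Lemma pr_sum (u v : V2) : unitv u -> unitv v -> dot u v = 0 ->
  u *m u^T + v *m v^T = 1.
Proof.
move=> /unit2 hu /unit2 hv; rewrite dotE => huv.
have [h1 [h2 h3]] := orth2 hu hv huv.
apply: mx2_eq; rewrite [LHS]mxE !outerE [RHS]mxE /= -?expr2 //.
by rewrite mulrC [v i1 0 * _]mulrC.
Qed.

Lemma pr_idem (u : V2) : unitv u -> (u *m u^T) *m (u *m u^T) = u *m u^T.
Proof. by move=> h; rewrite mulmxA -(mulmxA u) h mulmx1. Qed.

Lemma pr_tr (u : V2) : (u *m u^T)^T = u *m u^T.
Proof. by rewrite trmx_mul trmxK. Qed.

Lemma pow_proj (P : M2) a b k : P * P = P ->
  (a *: P + b *: (1 - P)) ^+ k = a^+k *: P + b^+k *: (1 - P).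
Proof.
move=> PP.
have P1P : P * (1 - P) = 0 by rewrite mulrBr mulr1 PP subrr.
have P1P' : (1 - P) * P = 0 by rewrite mulrBl mul1r PP subrr.
have P11 : (1 - P) * (1 - P) = 1 - P by rewrite mulrBl mul1r P1P subr0.
elim: k => [|k IH]; first by rewrite !expr0 !scale1r addrC subrK.
rewrite exprS IH mulrDl !mulrDr -!scalerAl -!scalerAr !scalerA PP P1P P1P' P11.
by rewrite !scaler0 addr0 add0r -!exprS.
Qed.

Lemma expm_proj (P : M2) a b : P * P = P ->
  expm (a *: P + b *: (1 - P)) = expR a *: P + expR b *: (1 - P).
Proof.
move=> PP; rewrite /expm.
have -> : series (fun k : nat => (k`!%:R)^-1 *: (a *: P + b *: (1 - P)) ^+ k) =
  (fun N => series (exp_coeff a) N *: P + series (exp_coeff b) N *: (1 - P)).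
  apply/funext => N; rewrite /series /=.
  under eq_bigr do rewrite pow_proj // scalerDr !scalerA.
  rewrite big_split /= -!scaler_suml; congr (_ *: _ + _ *: _);
  by apply: eq_bigr => k _; rewrite /exp_coeff /= mulrC.
apply: cvg_lim => //; apply: cvgD; apply: cvgZr_tmp; exact: is_cvg_series_exp_coeff.
Qed.

Definition tr2 (A : M2) : R := A i0 i0 + A i1 i1.
Definition det2 (A : M2) : R := A i0 i0 * A i1 i1 - A i0 i1 * A i1 i0.

Lemma spec2 (L : M2) : L^T = L -> exists a b (P : M2),
  [/\ P * P = P /\ P^T = P, L = a *: P + b *: (1 - P),
      a + b = tr2 L /\ a * b = det2 L, b <= a & (a = b -> P = 0)].
Proof.
move=> LT.
have Lsym : L i1 i0 = L i0 i1 by rewrite -[in LHS]LT mxE.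
set p := L i0 i0; set q := L i0 i1; set r := L i1 i1.
set h := (p - r) / 2.
have hge : 0 <= h ^+ 2 + q ^+ 2 by rewrite addr_ge0 // sqr_ge0.
set s := Num.sqrt (h ^+ 2 + q ^+ 2).
have s0 : 0 <= s by rewrite sqrtr_ge0.
have ss : s ^+ 2 = h ^+ 2 + q ^+ 2 by rewrite sqr_sqrtr.
set a := (p + r) / 2 + s; set b := (p + r) / 2 - s.
have hsum : a + b = tr2 L by rewrite /a /b /tr2 -/p -/r; field.
have hprod : a * b = det2 L.
  rewrite /det2 -/p -/q -/r Lsym -/q.
  have -> : a * b = ((p + r) / 2) ^+ 2 - s ^+ 2 by rewrite /a /b; ring.
  by rewrite ss /h; field.
have ba : b <= a by rewrite /a /b lerD2l; lra.
have CH : (L - b%:M) * (L - a%:M) = 0.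
  have eb : b = p + r - a by rewrite /b /a; field.
  have ea : a * (p + r - a) = p * r - q * q by rewrite -eb hprod /det2 -/p -/q -/r Lsym.
  apply: mx2_eq; rewrite mulmx2E !mxE /= -/p -/q -/r ?Lsym -/q eb; lra.
have [sz|snz] := eqVneq s 0.
  have hq : h = 0 /\ q = 0.
    by move: ss; rewrite sz expr0n /= => /esym E; split; nra.
  exists a, b, 0; split => //.
  - by rewrite mulr0 trmx0.
  - rewrite scaler0 add0r subr0 /b sz subr0.
    apply: mx2_eq; rewrite !mxE /= -/p -/q -/r ?Lsym -/q; move: hq => [hh hq0];
    rewrite /h in hh; rewrite ?mulr1 ?mulr0 ?hq0 //; lra.
have abnz : a - b != 0 by rewrite /a /b; apply/eqP => E; move/eqP: snz; apply; lra.
exists a, b, ((a - b)^-1 *: (L - b%:M)); split => //.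
- split; last first.
    apply/matrixP => i j; rewrite !mxE eq_sym; congr (_ * (_ - _)).
    by rewrite -[in RHS]LT mxE.
  rewrite -scalerAl -scalerAr scalerA.
  have -> : (L - b%:M) * (L - b%:M) = (L - b%:M) * (L - a%:M) + (L - b%:M) * (a - b)%:M.
    have addsc : forall x y : R, (L - y%:M) = (L - x%:M) + (x - y)%:M.
      by move=> x y; rewrite raddfB addrA subrK.
    by rewrite -mulrDr -addsc.
  rewrite CH add0r; have -> : (L - b%:M) * (a - b)%:M = (a - b) *: (L - b%:M) by exact: mul_mx_scalar.
  by rewrite scalerA mulrAC mulVf // mul1r.
- set X := (a - b)^-1 *: _. rewrite [b *: (1 - _)]scalerBr addrCA -scalerBl /X scalerA mulfV // scale1r.
  by rewrite scalemx1 addrC subrK.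
- by move=> E; move: abnz; rewrite E subrr eqxx.
Qed.

Lemma scal_key (x y : R) (M : M2) (g : R -> R) : (x - y) *: M = 0 -> g x *: M = g y *: M.
Proof.
have [->//|xy E] := eqVneq x y.
have xy' : x - y != 0 by rewrite subr_eq0.
have -> : M = 0 by rewrite -[M]scale1r -(mulVf xy') -scalerA E scaler0.
by rewrite !scaler0.
Qed.

Lemma rep_uniq (P P' : M2) al be al' be' (g : R -> R) : P * P = P -> P' * P' = P' ->
  al *: P + be *: (1 - P) = al' *: P' + be' *: (1 - P') ->
  g al *: P + g be *: (1 - P) = g al' *: P' + g be' *: (1 - P').
Proof.
move=> PP PP' E.
have P1P : forall Q : M2, Q * Q = Q -> Q * (1 - Q) = 0 by move=> Q QQ; rewrite mulrBr mulr1 QQ subrr.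
have P1P' : forall Q : M2, Q * Q = Q -> (1 - Q) * Q = 0 by move=> Q QQ; rewrite mulrBl mul1r QQ subrr.
have P11 : forall Q : M2, Q * Q = Q -> (1 - Q) * (1 - Q) = 1 - Q.
  by move=> Q QQ; rewrite mulrBl mul1r P1P // subr0.
set A := al *: P + be *: (1 - P).
have LP : P * A = al *: P by rewrite /A mulrDr -!scalerAr PP P1P // scaler0 addr0.
have LQ : (1 - P) * A = be *: (1 - P) by rewrite /A mulrDr -!scalerAr P1P' // P11 // scaler0 add0r.
have RP : A * P' = al' *: P' by rewrite /A E mulrDl -!scalerAl PP' P1P' // scaler0 addr0.
have RQ : A * (1 - P') = be' *: (1 - P') by rewrite /A E mulrDl -!scalerAl P1P // P11 // scaler0 add0r.
have k1 : (al - al') *: (P * P') = 0.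
  by rewrite scalerBl scalerAl -LP -mulrA RP -scalerAr subrr.
have k2 : (al - be') *: (P * (1 - P')) = 0.
  by rewrite scalerBl scalerAl -LP -mulrA RQ -scalerAr subrr.
have k3 : (be - al') *: ((1 - P) * P') = 0.
  by rewrite scalerBl scalerAl -LQ -mulrA RP -scalerAr subrr.
have k4 : (be - be') *: ((1 - P) * (1 - P')) = 0.
  by rewrite scalerBl scalerAl -LQ -mulrA RQ -scalerAr subrr.
have dP : forall Q : M2, Q = Q * P' + Q * (1 - P') by move=> Q; rewrite -mulrDr addrC subrK mulr1.
have dP' : forall Q : M2, Q = P * Q + (1 - P) * Q by move=> Q; rewrite -mulrDl addrC subrK mul1r.
have -> : g al *: P + g be *: (1 - P) = g al *: (P*P' + P*(1-P')) + g be *: ((1-P)*P' + (1-P)*(1-P')) by rewrite -!dP.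
have -> : g al' *: P' + g be' *: (1 - P') = g al' *: (P*P' + (1-P)*P') + g be' *: (P*(1-P') + (1-P)*(1-P')) by rewrite -!dP'.
rewrite !scalerDr (scal_key g k1) (scal_key g k2) (scal_key g k3) (scal_key g k4).
by rewrite addrACA.
Qed.

Lemma logm_rep (A Q : M2) al be : Q * Q = Q -> Q^T = Q -> 0 < al -> 0 < be ->
  A = al *: Q + be *: (1 - Q) -> logm A = ln al *: Q + ln be *: (1 - Q).
Proof.
move=> QQ QT al0 be0 EA.
set S := [set L : M2 | L^T = L /\ expm L = A].
have S0 : S (ln al *: Q + ln be *: (1 - Q)).
  split; first by rewrite linearD /= !linearZ /= linearB /= trmx1 QT.
  by rewrite expm_proj // !lnK // EA.
have [LT EL] := xgetI 0 S0.
rewrite /logm -/S; move: LT EL; set L := xget 0 S => LT EL.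
have [a [b [P [[PP _] EP _ _ _]]]] := spec2 LT.
rewrite EP in EL *; rewrite expm_proj // EA in EL.
have := rep_uniq (@ln R) PP QQ EL; rewrite !expRK => ->.
by [].
Qed.

Lemma inv_cvg0 : (fun m : nat => (m%:R : R)^-1) @ \oo --> 0.
Proof.
apply/(gtr0_cvgV0 (f := fun m : nat => (m%:R : R))); last exact: cvgr_idn.
by near=> m; rewrite ltr0n; near: m; exists 1%N.
Unshelve. all: end_near. Qed.

Lemma glog (x : nat -> R) th K1 K2 : 0 < K1 ->
  (forall m, K1 * expR (m%:R * th) <= x m <= K2 * expR (m%:R * th)) ->
  (fun m => (m%:R)^-1 * ln (x m)) @ \oo --> th.
Proof.
move=> K10 hb.
have K20 : 0 < K2.
  have /andP[h1 h2] := hb 0%N; rewrite mul0r expR0 !mulr1 in h1 h2.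
  exact: lt_le_trans K10 (le_trans h1 h2).
have cf : forall K, (fun m : nat => th + (m%:R)^-1 * ln K) @ \oo --> th.
  move=> K; rewrite -[X in _ --> X]addr0; apply: cvgD; first exact: cvg_cst.
  by rewrite -(mul0r (ln K)); apply: cvgMr_tmp; exact: inv_cvg0.
apply: (squeeze_cvgr _ (cf K1) (cf K2)).
near=> m.
have m0 : (0 : R) < m%:R by rewrite ltr0n; near: m; exists 1%N.
have /andP[h1 h2] := hb m.
have E0 : 0 < expR (m%:R * th) by exact: expR_gt0.
have x0 : 0 < x m by apply: lt_le_trans h1; rewrite mulr_gt0.
have lnE : forall K, 0 < K -> ln (K * expR (m%:R * th)) = ln K + m%:R * th.
  by move=> K K0; rewrite lnM ?posrE // expRK.
rewrite -(ler_ln _ x0) ?posrE ?mulr_gt0 // lnE // in h1.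
rewrite -(ler_ln x0) ?posrE ?mulr_gt0 // lnE // in h2.
apply/andP; split.
- rewrite -(ler_pM2l m0) mulrA mulfV ?gt_eqF // mul1r mulrDr mulrA mulfV ?gt_eqF //.
  by rewrite mul1r addrC.
- rewrite -(ler_pM2l m0) mulrA mulfV ?gt_eqF // mul1r mulrDr mulrA mulfV ?gt_eqF //.
  by rewrite mul1r addrC.
Unshelve. all: end_near. Qed.

Definition bl (x : V2) (A : M2) (y : V2) : R := (x^T *m A *m y) 0 0.

Lemma bl2E x A y : bl x A y = x i0 0 * A i0 i0 * y i0 0 + x i0 0 * A i0 i1 * y i1 0
   + (x i1 0 * A i1 i0 * y i0 0 + x i1 0 * A i1 i1 * y i1 0).
Proof. by rewrite /bl mulmx2E !mulmx2E !mxE; ring. Qed.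

Lemma blD x A B y : bl x (A + B) y = bl x A y + bl x B y.
Proof. by rewrite /bl mulmxDr mulmxDl mxE. Qed.

Lemma blZ x c A y : bl x (c *: A) y = c * bl x A y.
Proof. by rewrite /bl -scalemxAr -scalemxAl mxE. Qed.

Lemma bl0 x y : bl x 0 y = 0.
Proof. by rewrite /bl mulmx0 mul0mx mxE. Qed.

Lemma blB x A B y : bl x (A - B) y = bl x A y - bl x B y.
Proof. by rewrite -scaleN1r blD blZ mulN1r. Qed.

Lemma bl_sum (I : finType) x (F : I -> M2) y :
  bl x (\sum_k F k) y = \sum_k bl x (F k) y.
Proof. exact: (big_morph (fun A => bl x A y) (fun A B => blD x A B y) (bl0 x y)). Qed.

Lemma bl1 x y : bl x 1 y = dot x y.
Proof. by rewrite /bl mulmx1. Qed.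

Lemma bl_outer x z y : bl x (z *m z^T) y = dot x z * dot z y.
Proof. by rewrite /bl mulmxA -mulmxA mxE big_ord1. Qed.

Lemma bl_sym x A y : A^T = A -> bl x A y = bl y A x.
Proof.
move=> AT; rewrite /bl -!mulmxA.
have -> : x^T *m (A *m y) = (y^T *m (A *m x))^T.
  by rewrite !trmx_mul !trmxK AT mulmxA.
by rewrite mxE.
Qed.

Lemma dot_self_ge0 z : 0 <= dot z z.
Proof. by rewrite dotE -!expr2 addr_ge0 // sqr_ge0. Qed.

Lemma bl_psd Q x : Q * Q = Q -> Q^T = Q -> 0 <= bl x Q x.
Proof.
move=> QQ QT.
have -> : bl x Q x = dot (Q *m x) (Q *m x).
  by rewrite /dot trmx_mul QT mulmxA -(mulmxA _ Q Q) -/(Q * Q) QQ.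
exact: dot_self_ge0.
Qed.

Lemma cs2 (a b : V2) : dot a b ^+ 2 <= dot a a * dot b b.
Proof.
rewrite !dotE.
have -> : (a i0 0 * a i0 0 + a i1 0 * a i1 0) * (b i0 0 * b i0 0 + b i1 0 * b i1 0) =
  (a i0 0 * b i0 0 + a i1 0 * b i1 0) ^+ 2 + (a i0 0 * b i1 0 - a i1 0 * b i0 0) ^+ 2 by ring.
by rewrite lerDl sqr_ge0.
Qed.

Lemma bl_cs Q x y : Q * Q = Q -> Q^T = Q -> bl x Q y ^+ 2 <= bl x Q x * bl y Q y.
Proof.
move=> QQ QT.
have e : forall a b, bl a Q b = dot (Q *m a) (Q *m b).
  by move=> a b; rewrite /dot trmx_mul QT mulmxA -(mulmxA _ Q Q) -/(Q * Q) QQ.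
rewrite !e; exact: cs2.
Qed.

Definition cr (x y : V2) : R := x i0 0 * y i1 0 - x i1 0 * y i0 0.

Lemma cr_lag x y : unitv x -> unitv y -> cr x y ^+ 2 = 1 - dot x y ^+ 2.
Proof.
move=> /unit2 hx /unit2 hy; rewrite dotE /cr.
have -> : 1 = (x i0 0 ^+ 2 + x i1 0 ^+ 2) * (y i0 0 ^+ 2 + y i1 0 ^+ 2) by rewrite hx hy mulr1.
ring.
Qed.

Lemma dot_le1 x y : unitv x -> unitv y -> dot x y ^+ 2 <= 1.
Proof. move=> hx hy; have := cr_lag hx hy; have := sqr_ge0 (cr x y); lra. Qed.

Lemma cv2_eq (x y : V2) : x i0 0 = y i0 0 -> x i1 0 = y i1 0 -> x = y.
Proof.
move=> h1 h2; apply/matrixP => i j; rewrite (ord1 j).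
by case: (ord2P i) => ->.
Qed.

Lemma cr0_aligned x y : unitv x -> unitv y -> cr x y = 0 -> aligned x y.
Proof.
move=> hx hy c0.
have hd : dot x y ^+ 2 = 1 by have := cr_lag hx hy; rewrite c0 expr0n /=; lra.
set d := dot x y.
have ux := unit2 hx; have uy := unit2 hy.
have nz : (x i0 0 - d * y i0 0) ^+ 2 + (x i1 0 - d * y i1 0) ^+ 2 = 0.
  have -> : (x i0 0 - d * y i0 0) ^+ 2 + (x i1 0 - d * y i1 0) ^+ 2 =
     (x i0 0 ^+ 2 + x i1 0 ^+ 2) - 2 * d * (x i0 0 * y i0 0 + x i1 0 * y i1 0)
     + d ^+ 2 * (y i0 0 ^+ 2 + y i1 0 ^+ 2) by ring.
  by rewrite ux uy -dotE -/d mulr1 -mulrA -expr2 hd; ring.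
have q0 := sqr_ge0 (x i0 0 - d * y i0 0); have q1 := sqr_ge0 (x i1 0 - d * y i1 0).
have e0 : x i0 0 = d * y i0 0.
  have : (x i0 0 - d * y i0 0) ^+ 2 = 0 by lra.
  by move/eqP; rewrite sqrf_eq0 subr_eq0 => /eqP.
have e1 : x i1 0 = d * y i1 0.
  have : (x i1 0 - d * y i1 0) ^+ 2 = 0 by lra.
  by move/eqP; rewrite sqrf_eq0 subr_eq0 => /eqP.
have : (d - 1) * (d + 1) = 0 by rewrite -subr_sqr hd expr1n subrr.
move/eqP; rewrite mulf_eq0 => /orP[]; rewrite ?subr_eq0 ?addr_eq0 => /eqP dE;
  rewrite /aligned; apply/orP; [left|right]; apply/eqP; apply: cv2_eq;
  rewrite ?mxE ?e0 ?e1 dE; ring.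
Qed.

Lemma aligned_cr x y : aligned x y -> cr x y = 0.
Proof. by rewrite /aligned /cr => /orP[]/eqP ->; rewrite ?mxE; ring. Qed.

Section Asum.
Variables (K : finType) (c : K -> R) (y : K -> V2).
Let A : M2 := \sum_k c k *: (y k *m (y k)^T).

Lemma A_sym : A^T = A.
Proof. by rewrite /A linear_sum; apply: eq_bigr => k _; rewrite linearZ /= pr_tr. Qed.

Lemma A_entry i j : A i j = \sum_k c k * (y k i 0 * y k j 0).
Proof. by rewrite /A summxE; apply: eq_bigr => k _; rewrite mxE outerE. Qed.

Lemma A_bl x z : bl x A z = \sum_k c k * (dot x (y k) * dot (y k) z).
Proof. by rewrite /A bl_sum; apply: eq_bigr => k _; rewrite blZ bl_outer. Qed.

Lemma A_tr : (forall k, unitv (y k)) -> tr2 A = \sum_k c k.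
Proof.
move=> hu; rewrite /tr2 !A_entry -big_split /=; apply: eq_bigr => k _.
by rewrite -mulrDr -!expr2 unit2 // mulr1.
Qed.

Lemma A_det : 2 * det2 A = \sum_k \sum_l c k * c l * cr (y k) (y l) ^+ 2.
Proof.
pose a k := y k i0 0; pose b k := y k i1 0.
pose f k l := c k * c l * (a k ^+ 2 * b l ^+ 2 - a k * b k * (a l * b l)).
have E1 : det2 A = \sum_k \sum_l f k l.
  rewrite /det2 !A_entry !big_distrlr -sumrB; apply: eq_bigr => k _.
  by rewrite -sumrB; apply: eq_bigr => l _; rewrite /f /a /b /=; ring.
have E2 : det2 A = \sum_k \sum_l f l k by rewrite E1 exchange_big.
have -> : 2 * det2 A = det2 A + det2 A by ring.
rewrite {1}E1 E2 -big_split /=; apply: eq_bigr => k _.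
by rewrite -big_split /=; apply: eq_bigr => l _; rewrite /f /a /b /cr; ring.
Qed.
End Asum.

Lemma null_bdd (a b : nat -> R) : a @ \oo --> 0 -> (forall m, `|b m| <= 1) ->
  (fun m => a m * b m) @ \oo --> 0.
Proof.
move=> a0 hb.
have na : (fun m => `|a m|) @ \oo --> (0:R).
  by have := cvg_norm a0; rewrite normr0; apply.

apply: (@squeeze_cvgr _ _ _ _ (fun m => - `|a m|) (fun m => `|a m|)).
- near=> m; rewrite -ler_norml normrM.
  by rewrite -[X in _ <= X](mulr1 `|a m|); apply: ler_wpM2l.
- by rewrite -oppr0; exact: (cvgN na).
- exact: na.
Unshelve. all: end_near. Qed.

Lemma outer_mid (x z : V2) M : (x *m x^T) *m M *m (z *m z^T) = bl x M z *: (x *m z^T).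
Proof.
have -> : x *m x^T *m M *m (z *m z^T) = x *m (x^T *m M *m z) *m z^T by rewrite !mulmxA.
by rewrite [x^T *m M *m z]mx11_scalar mul_mx_scalar -scalemxAl.
Qed.

Section Basis.
Variables (u1 w : V2).
Hypotheses (hu : unitv u1) (hw : unitv w) (huw : dot u1 w = 0).

Lemma basis_one : u1 *m u1^T + w *m w^T = 1.
Proof. exact: pr_sum. Qed.

Lemma decomp M : M^T = M -> M = bl u1 M u1 *: (u1 *m u1^T)
  + bl u1 M w *: (u1 *m w^T + w *m u1^T) + bl w M w *: (w *m w^T).
Proof.
move=> MT.
have e : M = (u1 *m u1^T + w *m w^T) *m M *m (u1 *m u1^T + w *m w^T).
  by rewrite basis_one mul1mx mulmx1.
rewrite {1}e mulmxDl !mulmxDr !mulmxDl !outer_mid (bl_sym w) // scalerDr.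
by rewrite [X in _ = _ + X + _]addrC !addrA.
Qed.

Lemma trace_basis M : bl u1 M u1 + bl w M w = tr2 M.
Proof.
have E := basis_one.
have f : forall i j, u1 i 0 * u1 j 0 + w i 0 * w j 0 = (1 : M2) i j.
  by move=> i j; rewrite -E mxE !outerE.
have f00 := f i0 i0; have f01 := f i0 i1; have f10 := f i1 i0; have f11 := f i1 i1.
rewrite !mxE /= in f00 f01 f10 f11.
rewrite !bl2E /tr2.
set a0 := u1 i0 0; set a1 := u1 i1 0; set b0 := w i0 0; set b1 := w i1 0.
rewrite -/a0 -/a1 -/b0 -/b1 in f00 f01 f10 f11.
have -> : a0 * M i0 i0 * a0 + a0 * M i0 i1 * a1 + (a1 * M i1 i0 * a0 + a1 * M i1 i1 * a1) +
  (b0 * M i0 i0 * b0 + b0 * M i0 i1 * b1 + (b1 * M i1 i0 * b0 + b1 * M i1 i1 * b1)) =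
  (a0 * a0 + b0 * b0) * M i0 i0 + (a0 * a1 + b0 * b1) * M i0 i1 +
  (a1 * a0 + b1 * b0) * M i1 i0 + (a1 * a1 + b1 * b1) * M i1 i1 by ring.
rewrite f00 f01 f10 f11; ring.
Qed.

Lemma blS (t : R) (La Lb : R) (Q : M2) x y :
  bl x (t *: (La *: Q + Lb *: (1 - Q))) y = t * La * bl x Q y + t * Lb * (dot x y - bl x Q y).
Proof. by rewrite blZ blD !blZ blB bl1; ring. Qed.

Lemma S_sym (t La Lb : R) (Q : M2) : Q^T = Q -> (t *: (La *: Q + Lb *: (1 - Q)))^T = t *: (La *: Q + Lb *: (1 - Q)).
Proof. by move=> QT; rewrite linearZ /= linearD /= !linearZ /= linearB /= trmx1 QT. Qed.

Lemma conv_gen (al be : nat -> R) (Q : nat -> M2) (pl ol rl : R) :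
  (forall m, (Q m)^T = Q m) ->
  (fun m => let S := (m%:R)^-1 *: (ln (al m) *: Q m + ln (be m) *: (1 - Q m)) in bl u1 S u1) @ \oo --> pl ->
  (fun m => let S := (m%:R)^-1 *: (ln (al m) *: Q m + ln (be m) *: (1 - Q m)) in bl u1 S w) @ \oo --> ol ->
  (fun m => let S := (m%:R)^-1 *: (ln (al m) *: Q m + ln (be m) *: (1 - Q m)) in bl w S w) @ \oo --> rl ->
  (fun m => (m%:R)^-1 *: (ln (al m) *: Q m + ln (be m) *: (1 - Q m))) @ \oo -->
    pl *: (u1 *m u1^T) + ol *: (u1 *m w^T + w *m u1^T) + rl *: (w *m w^T).
Proof.
move=> QT cp co cr'.
have -> : (fun m => (m%:R)^-1 *: (ln (al m) *: Q m + ln (be m) *: (1 - Q m))) =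
  (fun m => let S := (m%:R)^-1 *: (ln (al m) *: Q m + ln (be m) *: (1 - Q m)) in
   bl u1 S u1 *: (u1 *m u1^T) + bl u1 S w *: (u1 *m w^T + w *m u1^T) + bl w S w *: (w *m w^T)).
  by apply/funext => m /=; rewrite -decomp // S_sym.
by apply: cvgD; [apply: cvgD|]; apply: cvgZr_tmp.
Qed.

Lemma conv_eq (al be : nat -> R) (Q : nat -> M2) la :
  (forall m, Q m * Q m = Q m /\ (Q m)^T = Q m /\ tr2 (Q m) <= 1) ->
  (fun m => (m%:R)^-1 * ln (al m)) @ \oo --> la ->
  (fun m => (m%:R)^-1 * ln (be m)) @ \oo --> la ->
  (fun m => (m%:R)^-1 *: (ln (al m) *: Q m + ln (be m) *: (1 - Q m))) @ \oo --> la%:M.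
Proof.
move=> hQ ca cb.
have -> : la%:M = la *: (u1 *m u1^T) + 0 *: (u1 *m w^T + w *m u1^T) + la *: (w *m w^T).
  by rewrite scale0r addr0 -scalerDr basis_one scalemx1.
have bnd1 : forall m, 0 <= bl u1 (Q m) u1 <= 1.
  move=> m; have [QQ [QT tQ]] := hQ m; have := trace_basis (Q m).
  have := bl_psd u1 QQ QT; have := bl_psd w QQ QT; move=> *; apply/andP; split; lra.
have bnd2 : forall m, 0 <= bl w (Q m) w <= 1.
  move=> m; have [QQ [QT tQ]] := hQ m; have := trace_basis (Q m).
  have := bl_psd u1 QQ QT; have := bl_psd w QQ QT; move=> *; apply/andP; split; lra.
have comb : forall th : nat -> R, (forall m, 0 <= th m <= 1) ->
  (fun m => (m%:R)^-1 * ln (al m) * th m + (m%:R)^-1 * ln (be m) * (1 - th m)) @ \oo --> la.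
  move=> th hth.
  have e : (fun m => (m%:R)^-1 * ln (al m) * th m + (m%:R)^-1 * ln (be m) * (1 - th m)) =
    (fun m => la + (((m%:R)^-1 * ln (al m) - la) * th m + ((m%:R)^-1 * ln (be m) - la) * (1 - th m))).
    by apply/funext => m; ring.
  rewrite e -[X in _ --> X]addr0 -[X in _ --> la + X]addr0.
  apply: cvgD; first exact: cvg_cst.
  apply: cvgD; apply: null_bdd.
  - by rewrite -(subrr la); apply: cvgB => //; exact: cvg_cst.
  - by move=> m; have /andP[h1 h2] := hth m; rewrite ger0_norm.
  - by rewrite -(subrr la); apply: cvgB => //; exact: cvg_cst.
  - by move=> m; have /andP[h1 h2] := hth m; rewrite ger0_norm; lra.
apply: conv_gen => /=.
- by move=> m; case: (hQ m) => _ [].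
- under eq_fun do rewrite blS (unitvP hu).
  exact: comb.
- under eq_fun do rewrite blS huw.
  have e : (fun m => (m%:R)^-1 * ln (al m) * bl u1 (Q m) w + (m%:R)^-1 * ln (be m) * (0 - bl u1 (Q m) w))
     = (fun m => ((m%:R)^-1 * ln (al m) - (m%:R)^-1 * ln (be m)) * bl u1 (Q m) w).
    by apply/funext => m; ring.
  rewrite e; apply: null_bdd.
  + by rewrite -(subrr la); apply: cvgB.
  + move=> m; have [QQ [QT tQ]] := hQ m; have := bl_cs u1 w QQ QT.
    have /andP[h1 h2] := bnd1 m; have /andP[h3 h4] := bnd2 m.
    move=> h; rewrite ler_norml; apply/andP; split; nra.
- under eq_fun do rewrite blS (unitvP hw).
  exact: comb.
Qed.

Lemma conv_ne (al be : nat -> R) (Q : nat -> M2) (la nu : R) :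
  (forall m, (Q m)^T = Q m) ->
  (\forall m \near \oo, tr2 (Q m) = 1) ->
  (fun m => bl w (Q m) w) @ \oo --> 0 ->
  (fun m => bl u1 (Q m) w) @ \oo --> 0 ->
  (fun m => (m%:R)^-1 * ln (al m)) @ \oo --> la ->
  (fun m => (m%:R)^-1 * ln (be m)) @ \oo --> nu ->
  (fun m => (m%:R)^-1 *: (ln (al m) *: Q m + ln (be m) *: (1 - Q m))) @ \oo -->
    la *: (u1 *m u1^T) + nu *: (w *m w^T).
Proof.
move=> QT ht c22 c12 ca cb.
have ct : (fun m => tr2 (Q m)) @ \oo --> (1:R).
  have H : {near \oo, (fun _ => (1:R)) =1 (fun m => tr2 (Q m))}.
    by near=> m; rewrite (near ht m).
  apply: (cvg_trans (near_eq_cvg H)); exact: cvg_cst.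
have c11 : (fun m => bl u1 (Q m) u1) @ \oo --> (1:R).
  have -> : (fun m => bl u1 (Q m) u1) = (fun m => tr2 (Q m) - bl w (Q m) w).
    by apply/funext => m; rewrite -(trace_basis (Q m)) addrK.
  by rewrite -[X in _ --> X]subr0; apply: cvgB.
have -> : la *: (u1 *m u1^T) + nu *: (w *m w^T) =
  la *: (u1 *m u1^T) + 0 *: (u1 *m w^T + w *m u1^T) + nu *: (w *m w^T).
  by rewrite scale0r addr0.
apply: conv_gen => /=.
- exact: QT.
- under eq_fun do rewrite blS (unitvP hu).
  suff H : (fun m => (m%:R)^-1 * ln (al m) * bl u1 (Q m) u1 + (m%:R)^-1 * ln (be m) * (1 - bl u1 (Q m) u1)) @ \oo --> la * 1 + nu * (1 - 1).
    by rewrite subrr mulr0 addr0 mulr1 in H.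
  by apply: cvgD; apply: cvgM => //; apply: cvgB => //; exact: cvg_cst.
- under eq_fun do rewrite blS huw.
  suff H : (fun m => (m%:R)^-1 * ln (al m) * bl u1 (Q m) w + (m%:R)^-1 * ln (be m) * (0 - bl u1 (Q m) w)) @ \oo --> la * 0 + nu * (0 - 0).
    by rewrite subrr !mulr0 addr0 in H.
  by apply: cvgD; apply: cvgM => //; apply: cvgB => //; exact: cvg_cst.
- under eq_fun do rewrite blS (unitvP hw).
  suff H : (fun m => (m%:R)^-1 * ln (al m) * bl w (Q m) w + (m%:R)^-1 * ln (be m) * (1 - bl w (Q m) w)) @ \oo --> la * 0 + nu * (1 - 0).
    by rewrite subr0 mulr0 mulr1 add0r in H.
  by apply: cvgD; apply: cvgM => //; apply: cvgB => //; exact: cvg_cst.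
Unshelve. all: end_near. Qed.
End Basis.

Lemma lemax (x y z : R) : x <= y \/ x <= z -> x <= Num.max y z.
Proof.
rewrite /Num.max /Num.Def.maxr /Order.max; case: ifP => h [h1|h1] //.
- by apply: le_trans h1 (ltW h).
- by move/negbT: h; rewrite -leNgt => h; apply: le_trans h1 h.
Qed.

Lemma maxE (y z : R) : Num.max y z = y \/ Num.max y z = z.
Proof. rewrite /Num.max /Num.Def.maxr /Order.max. case: ifP; auto. Qed.

Lemma bigmax_ge (I : eqType) (s : seq I) (P : pred I) (F : I -> R) x0 k :
  k \in s -> P k -> F k <= \big[Num.max/x0]_(i <- s | P i) F i.
Proof.
elim: s => [//|i s IH] /= hin Pk; rewrite big_cons.
move: hin; rewrite in_cons => /orP[/eqP <-|hin]; first by rewrite Pk; apply: lemax; left.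
case: (P i); last exact: IH.
by apply: lemax; right; exact: IH.
Qed.

Lemma sum_ge_term (I : finType) (g : I -> R) j : (forall i, 0 <= g i) -> g j <= \sum_i g i.
Proof. by move=> h; rewrite (bigD1 j) //= lerDl sumr_ge0. Qed.

Lemma sum_le_const (I : finType) (g : I -> R) B : (forall i, g i <= B) -> \sum_i g i <= #|I|%:R * B.
Proof. by move=> h; rewrite mulr_natl -sumr_const; apply: ler_sum => i _; exact: h. Qed.

Lemma dotN x y : dot (- x) y = - dot x y.
Proof. by rewrite !dotE !mxE; ring. Qed.

Lemma aligned_dot (y u1 w : V2) : aligned y u1 -> dot u1 w = 0 -> dot y w = 0.
Proof. by rewrite /aligned => /orP[]/eqP -> h; rewrite ?dotN h ?oppr0. Qed.

Lemma aligned_cr2 (y z u1 : V2) : aligned y u1 -> aligned z u1 -> cr y z = 0.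
Proof.
rewrite /aligned => /orP[]/eqP -> /orP[]/eqP ->; rewrite /cr ?mxE; ring.
Qed.

Lemma cr_le1 x y : unitv x -> unitv y -> cr x y ^+ 2 <= 1.
Proof. move=> hx hy; rewrite cr_lag //; have := sqr_ge0 (dot x y); lra. Qed.

Lemma dot_le1' x y : unitv x -> unitv y -> `|dot x y| <= 1.
Proof.
move=> hx hy; have := dot_le1 hx hy; move=> h; rewrite ler_norml; apply/andP; split; nra.
Qed.

Section Main.
Variables (n : nat) (X : 'I_n.+1 -> M2) (lam mu : 'I_n.+1 -> R) (u v : 'I_n.+1 -> V2) (w : V2).
Hypotheses (hsym : forall i, (X i)^T = X i)
  (horth : forall i, unitv (u i) /\ unitv (v i) /\ (u i)^T *m v i = 0)
  (hmu : forall i, mu i <= lam i)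
  (hX : forall i, X i = lam i *: (u i *m (u i)^T) + mu i *: (v i *m (v i)^T))
  (hmax : forall i, lam i <= lam ord0)
  (hw : unitv w) (huw : (u ord0)^T *m w = 0).

Local Notation K := ('I_n.+1 * bool)%type.
Local Notation val := (eig_val lam mu).
Local Notation yv := (eig_vec u v).
Local Notation l1 := (lam ord0).
Local Notation u1 := (u ord0).
Local Notation k0 := ((ord0, true) : K).
Local Notation kf := ((ord0, false) : K).

Definition cc (m : nat) (k : K) : R := expR (m%:R * val k).
Definition AA (m : nat) : M2 := \sum_k cc m k *: (yv k *m (yv k)^T).
Local Notation E m t := (expR (m%:R * t)).
Local Notation NN := (#|{: K}|%:R : R).

Lemma yv_unit k : unitv (yv k).
Proof. by case: k => i [] /=; have [? [? ?]] := horth i. Qed.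

Lemma val_le k : val k <= l1.
Proof. by case: k => i []; rewrite /eig_val /=; [exact: hmax | exact: le_trans (hmu i) (hmax i)]. Qed.

Lemma hu1 : unitv u1. Proof. by have [? [? ?]] := horth ord0. Qed.
Lemma huw' : dot u1 w = 0. Proof. exact: orthP. Qed.

Lemma expm_Xi m i : expm (m%:R *: X i) =
  expR (m%:R * lam i) *: (u i *m (u i)^T) + expR (m%:R * mu i) *: (v i *m (v i)^T).
Proof.
have [hu [hv huv]] := horth i.
have E : v i *m (v i)^T = 1 - u i *m (u i)^T.
  by rewrite -(pr_sum hu hv (orthP huv)) addrAC subrr add0r.
by rewrite hX scalerDr !scalerA E expm_proj //; exact: pr_idem.
Qed.

Lemma AA_eq m : \sum_i expm (m%:R *: X i) = AA m.
Proof.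
rewrite /AA -(@pair_big _ _ _ _ _ xpredT xpredT (fun i b => cc m (i, b) *: (yv (i, b) *m (yv (i, b))^T))) /=.
by apply: eq_bigr => i _; rewrite big_bool /= expm_Xi.
Qed.

Lemma cc_gt0 m k : 0 < cc m k. Proof. exact: expR_gt0. Qed.

Lemma cc_le m k : cc m k <= E m l1.
Proof. by rewrite /cc ler_expR ler_wpM2l // val_le. Qed.

Lemma cc_k0 m : cc m k0 = E m l1. Proof. by []. Qed.

Lemma AA_tr m : tr2 (AA m) = \sum_k cc m k.
Proof. by rewrite /AA A_tr //; exact: yv_unit. Qed.

Lemma AA_sym m : (AA m)^T = AA m.
Proof. exact: A_sym. Qed.

Lemma tr_bounds m : E m l1 <= tr2 (AA m) <= NN * E m l1.
Proof.
rewrite AA_tr; apply/andP; split.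
- by rewrite -cc_k0; apply: sum_ge_term => k; exact: ltW (cc_gt0 m k).
- apply: sum_le_const => k; exact: cc_le.
Qed.

Lemma det_lower m k l : cc m k * cc m l * cr (yv k) (yv l) ^+ 2 <= 2 * det2 (AA m).
Proof.
rewrite /AA A_det.
set g := fun k l => cc m k * cc m l * cr (yv k) (yv l) ^+ 2.
have g0 : forall k l, 0 <= g k l.
  by move=> *; apply: mulr_ge0; [apply: mulr_ge0; exact: ltW (cc_gt0 _ _) | exact: sqr_ge0].
have h1 : g k l <= \sum_j g k j by apply: sum_ge_term; exact: g0.
have h2 : \sum_j g k j <= \sum_i \sum_j g i j.
  by apply: (@sum_ge_term _ (fun i => \sum_j g i j) k) => i; apply: sumr_ge0 => j _; exact: g0.
exact: le_trans h1 h2.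
Qed.

Lemma det_upper m B : (forall k l, cc m k * cc m l * cr (yv k) (yv l) ^+ 2 <= B) ->
  2 * det2 (AA m) <= NN * (NN * B).
Proof.
move=> h; rewrite /AA A_det; apply: sum_le_const => k; apply: sum_le_const => l; exact: h.
Qed.

Lemma det_pos m : 0 < det2 (AA m).
Proof.
have := det_lower m k0 kf.
have [hu [hv huv]] := horth ord0.
rewrite /= cr_lag // (orthP huv) expr0n /= subr0 mulr1.
have := cc_gt0 m k0; have := cc_gt0 m kf => h1 h2 h3.
have : 0 < cc m k0 * cc m kf by rewrite mulr_gt0.
lra.
Qed.

Lemma NN_gt0 : 0 < NN.
Proof. by rewrite ltr0n; apply/card_gt0P; exists k0. Qed.

Lemma tr2_rep (a b : R) (Q : M2) : tr2 (a *: Q + b *: (1 - Q)) = a * tr2 Q + b * (2 - tr2 Q).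
Proof. by rewrite /tr2 !mxE /=; ring. Qed.

Definition spec_prop (m : nat) (t : R * R * M2) : Prop :=
  [/\ t.2 * t.2 = t.2 /\ t.2^T = t.2, AA m = t.1.1 *: t.2 + t.1.2 *: (1 - t.2),
      t.1.1 + t.1.2 = tr2 (AA m) /\ t.1.1 * t.1.2 = det2 (AA m),
      0 < t.1.2 <= t.1.1 & (t.1.1 = t.1.2 -> t.2 = 0)].

Lemma spec_ex m : exists t, spec_prop m t.
Proof.
have [a [b [P [[PP PT] EP [hs hp] ba abP]]]] := spec2 (AA_sym m).
exists (a, b, P); split => //=.
have d0 := det_pos m; rewrite -hp in d0.
have /andP[t1 _] := tr_bounds m; rewrite -hs in t1.
have e0 := expR_gt0 (m%:R * l1).
apply/andP; split => //; nra.
Qed.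

Lemma trQ_prop m t : spec_prop m t -> tr2 t.2 <= 1 /\ (t.1.1 != t.1.2 -> tr2 t.2 = 1).
Proof.
case=> [[PP PT] EA [hs hp] /andP[b0 ba] abP].
have e : (t.1.1 - t.1.2) * (tr2 t.2 - 1) = 0.
  move: hs; rewrite EA tr2_rep => h.
  have -> : (t.1.1 - t.1.2) * (tr2 t.2 - 1) = (t.1.1 * tr2 t.2 + t.1.2 * (2 - tr2 t.2)) - (t.1.1 + t.1.2) by ring.
  by rewrite h subrr.
split.
- have [E|NE] := eqVneq t.1.1 t.1.2; first by rewrite abP // /tr2 !mxE; lra.
  move/eqP: e; rewrite mulf_eq0 subr_eq0 (negbTE NE) /= subr_eq0 => /eqP ->; exact: lexx.
- move=> NE; move/eqP: e; rewrite mulf_eq0 subr_eq0 (negbTE NE) /= subr_eq0 => /eqP //.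
Qed.

Lemma al_bounds m t : spec_prop m t -> (1 / 2) * E m l1 <= t.1.1 <= NN * E m l1.
Proof.
case=> _ _ [hs _] /andP[b0 ba] _; have /andP[h1 h2] := tr_bounds m.
rewrite -hs in h1 h2; apply/andP; split; lra.
Qed.

Lemma be_bounds m t (D1 D2 th : R) : spec_prop m t -> 0 < D1 ->
  D1 * E m (l1 + th) <= det2 (AA m) <= D2 * E m (l1 + th) ->
  (D1 / NN) * E m th <= t.1.2 <= (2 * D2) * E m th.
Proof.
move=> sp D10 /andP[d1 d2].
have /andP[a1 a2] := al_bounds sp.
case: sp => _ _ [_ hp] /andP[b0 ba] _.
rewrite mulrDr expRD in d1 d2.
have E1 := expR_gt0 (m%:R * l1); have Et := expR_gt0 (m%:R * th).
have N0 := NN_gt0.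
have al0 : 0 < t.1.1 by apply: lt_le_trans ba.
set x := E m l1 in a1 a2 d1 d2 E1; set y := E m th in d1 d2 Et *.
set a := t.1.1 in a1 a2 hp al0 ba *; set b := t.1.2 in hp b0 ba *.
rewrite -hp in d1 d2.
apply/andP; split.
- have H : x * (D1 * y) <= x * (b * NN) by nra.
  by rewrite mulrAC ler_pdivrMr // -(ler_pM2l E1).
- have H : x * b <= x * (2 * D2 * y) by nra.
  by rewrite -(ler_pM2l E1).
Qed.

Lemma trv_u (x y : V2) : x^T *m y = 0 -> y^T *m x = 0.
Proof. by move=> h; rewrite -[x]trmxK -trmx_mul h trmx0. Qed.

Lemma Xy k : X k.1 *m yv k = val k *: yv k.
Proof.
case: k => i b; have [hu [hv huv]] := horth i; have hvu := trv_u huv.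
rewrite hX mulmxDl -!scalemxAl -!mulmxA.
by case: b => /=; rewrite ?hu ?hv ?huv ?hvu ?mulmx1 ?mulmx0 ?scaler0 ?addr0 ?add0r.
Qed.

Lemma aligned_refl (x : V2) : aligned x x.
Proof. by rewrite /aligned eqxx. Qed.

Lemma nal_k0 k : ~~ aligned (yv k) u1 -> k != k0.
Proof. by apply: contra => /eqP ->; exact: aligned_refl. Qed.

Lemma kf_nal : ~~ aligned (yv kf) u1.
Proof.
apply/negP => /aligned_cr; have [hu [hv huv]] := horth ord0.
move=> c0; have := cr_lag hv hu; rewrite c0 dotC (orthP huv) !expr0n /= subr0.
by move/eqP; rewrite eq_sym oner_eq0.
Qed.

Definition condP := ~~ unique_eig lam mu l1 /\ exists2 z, Vsup X l1 z & ~~ aligned z u1.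

Lemma exk_cond : (exists k, val k = l1 /\ ~~ aligned (yv k) u1) -> condP.
Proof.
move=> [k [vk nal]]; split.
- rewrite /unique_eig.
  have -> : #|[set k | eig_val lam mu k == l1]| = #|[set k | eig_val lam mu k == l1]%SET|.
    by apply: eq_card => x; rewrite [in RHS]inE; apply/idP/idP; rewrite in_setE.
  set S := [set k | eig_val lam mu k == l1]%SET.
  have sub : [set k; k0]%SET \subset S.
    by apply/fintype.subsetP => x; rewrite !inE => /orP[]/eqP ->; rewrite ?vk eqxx.
  have := subset_leq_card sub; rewrite cards2 (nal_k0 nal) => h.
  by apply/eqP => HE; rewrite HE in h.
- exists (yv k) => //; split; first exact: yv_unit.
  by exists k.1; rewrite Xy vk.
Qed.

Lemma mulcv11 (x : V2) (B : 'M[R]_1) : x *m B = B 0 0 *: x.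
Proof. by rewrite {1}[B]mx11_scalar mul_mx_scalar. Qed.

Lemma cr_lin (a b : R) (x y z : V2) : cr (a *: x + b *: y) z = a * cr x z + b * cr y z.
Proof. by rewrite /cr !mxE; ring. Qed.

Lemma cond_exk : condP -> exists k, val k = l1 /\ ~~ aligned (yv k) u1.
Proof.
move=> [_ [z [hz [i Hi]] nal]].
apply: contrapT => H.
have H' : forall k, val k = l1 -> aligned (yv k) u1.
  move=> k vk; apply: contrapT => nk; apply: H; exists k; split => //; exact/negP.
have [hu [hv huv]] := horth i; have hvu := trv_u huv.
have dec : z = dot (u i) z *: u i + dot (v i) z *: v i.
  have e : (1%:M : M2) = u i *m (u i)^T + v i *m (v i)^T by rewrite (pr_sum hu hv (orthP huv)).
  by rewrite -[z in LHS]mul1mx e mulmxDl -!mulmxA !mulcv11.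
have key : forall (y : V2) (c : R), unitv y -> X i *m y = c *: y -> (c - l1) * dot y z = 0.
  move=> y c hy hXy.
  have e1 : bl y (X i) z = l1 * dot y z.
    by rewrite /bl -mulmxA Hi -scalemxAr mxE.
  have e2 : bl y (X i) z = c * dot y z.
    rewrite bl_sym // /bl -mulmxA hXy -scalemxAr mxE dotC //.
  by rewrite mulrBl -e1 -e2 subrr.
have t1 : dot (u i) z * cr (u i) u1 = 0.
  have := key (u i) (lam i) hu (Xy (i, true)).
  have [E1|E1] := eqVneq (lam i) l1.
  - by move=> _; rewrite (aligned_cr (H' (i, true) E1)) mulr0.
  - by move/eqP; rewrite mulf_eq0 subr_eq0 (negbTE E1) /= => /eqP ->; rewrite mul0r.
have t2 : dot (v i) z * cr (v i) u1 = 0.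
  have := key (v i) (mu i) hv (Xy (i, false)).
  have [E1|E1] := eqVneq (mu i) l1.
  - by move=> _; rewrite (aligned_cr (H' (i, false) E1)) mulr0.
  - by move/eqP; rewrite mulf_eq0 subr_eq0 (negbTE E1) /= => /eqP ->; rewrite mul0r.
have : cr z u1 = 0 by rewrite dec cr_lin t1 t2 addr0.
move/(cr0_aligned hz hu1); exact/negP.
Qed.

Local Notation ms := (mu_star lam mu u v ord0).

Lemma ms_ge k : ~~ aligned (yv k) u1 -> val k <= ms.
Proof.
move=> nk; rewrite /mu_star; apply: bigmax_ge; first exact: mem_index_enum.
by rewrite (nal_k0 nk) nk.
Qed.

Lemma ms_att : exists k, val k = ms /\ ~~ aligned (yv k) u1.
Proof.
rewrite /mu_star; apply: (big_ind (fun x => exists k, val k = x /\ ~~ aligned (yv k) u1)).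
- by exists kf; split => //; exact: kf_nal.
- move=> x y [k1 [h1 n1]] [k2 [h2 n2]]; case: (maxE x y) => ->.
  + by exists k1.
  + by exists k2.
- by move=> k /andP[_ nk]; exists k.
Qed.

Lemma ms_lt : ~ condP -> ms < l1.
Proof.
move=> H; have [k [vk nk]] := ms_att.
rewrite -vk lt_neqAle val_le andbT; apply/eqP => e; apply: H; apply: exk_cond.
by exists k.
Qed.

Lemma aligned_sym (x y : V2) : aligned x y -> aligned y x.
Proof.
rewrite /aligned => /orP[]/eqP ->; first by rewrite eqxx.
by rewrite opprK eqxx orbT.
Qed.

Lemma delta_pos k : ~~ aligned (yv k) u1 -> 0 < cr u1 (yv k) ^+ 2.
Proof.
move=> nk; rewrite lt_def sqr_ge0 andbT sqrf_eq0; apply/eqP => c0.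
by move: nk; rewrite (aligned_sym (cr0_aligned hu1 (yv_unit k) c0)).
Qed.

Lemma cc_le_ms m k : ~~ aligned (yv k) u1 -> cc m k <= E m ms.
Proof. by move=> nk; rewrite /cc ler_expR ler_wpM2l // ms_ge. Qed.

Lemma cc_ge0 m k : 0 <= cc m k. Proof. exact: ltW (cc_gt0 m k). Qed.

Lemma prod_bound (a b c A B : R) : 0 <= a -> 0 <= b -> 0 <= c -> c <= 1 -> a <= A -> b <= B ->
  a * b * c <= A * B.
Proof.
move=> a0 b0 c0 c1 aA bB.
have h1 : a * b * c <= a * b by rewrite -[X in _ <= X]mulr1; apply: ler_wpM2l => //; rewrite mulr_ge0.
by apply: le_trans h1 _; apply: ler_pM.
Qed.

Lemma term_ms m k l : cc m k * cc m l * cr (yv k) (yv l) ^+ 2 <= E m l1 * E m ms.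
Proof.
have hc := cr_le1 (yv_unit k) (yv_unit l).
have c0 := sqr_ge0 (cr (yv k) (yv l)).
have e1 := expR_gt0 (m%:R * l1); have e2 := expR_gt0 (m%:R * ms).
have ck := cc_ge0 m k; have cl := cc_ge0 m l.
have [ak|nk] := boolP (aligned (yv k) u1); have [al|nl] := boolP (aligned (yv l) u1).
- rewrite (aligned_cr2 ak al) expr0n /= mulr0; exact: ltW (mulr_gt0 e1 e2).
- by apply: prod_bound => //; [exact: cc_le | exact: cc_le_ms].
- by rewrite [E m l1 * E m ms]mulrC;
     apply: prod_bound => //; [exact: cc_le_ms | exact: cc_le].
- by rewrite [E m l1 * E m ms]mulrC;
     apply: prod_bound => //; [exact: cc_le_ms | exact: cc_le].
Qed.

Lemma term_l1 m k l : cc m k * cc m l * cr (yv k) (yv l) ^+ 2 <= E m l1 * E m l1.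
Proof.
have hc := cr_le1 (yv_unit k) (yv_unit l).
by apply: prod_bound => //; rewrite ?cc_ge0 ?sqr_ge0 ?cc_le.
Qed.

Lemma det_bounds m (th : R) k : val k = th -> ~~ aligned (yv k) u1 ->
  (forall k l, cc m k * cc m l * cr (yv k) (yv l) ^+ 2 <= E m l1 * E m th) ->
  (cr u1 (yv k) ^+ 2 / 2) * E m (l1 + th) <= det2 (AA m) <= (NN * NN / 2) * E m (l1 + th).
Proof.
move=> vk nk hup; rewrite mulrDr expRD.
have hl := det_lower m k0 k; rewrite /= /cc vk /= in hl.
have hu := det_upper hup.
set d := cr u1 (yv k) ^+ 2 in hl *.
set x := E m l1 in hl hu *; set y := E m th in hl hu *.
apply/andP; split; nra.
Qed.

Lemma term_w m k : 0 <= cc m k * (dot w (yv k) * dot (yv k) w) <= E m ms.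
Proof.
rewrite [dot w _]dotC -expr2.
have e2 := expR_gt0 (m%:R * ms).
have [ak|nk] := boolP (aligned (yv k) u1).
- by rewrite (aligned_dot ak huw') expr0n /= mulr0 lexx ltW.
- have h := dot_le1 (yv_unit k) hw.
  apply/andP; split; first by rewrite mulr_ge0 ?cc_ge0 ?sqr_ge0.
  rewrite -[X in _ <= X]mulr1; apply: ler_pM; rewrite ?cc_ge0 ?sqr_ge0 //.
  exact: cc_le_ms.
Qed.

Lemma blA_w m : 0 <= bl w (AA m) w <= NN * E m ms.
Proof.
rewrite /AA A_bl; apply/andP; split.
- by apply: sumr_ge0 => k _; have /andP[] := term_w m k.
- by apply: sum_le_const => k; have /andP[] := term_w m k.
Qed.

Lemma term_uw m k : `|cc m k * (dot u1 (yv k) * dot (yv k) w)| <= E m ms.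
Proof.
have e2 := expR_gt0 (m%:R * ms).
have [ak|nk] := boolP (aligned (yv k) u1).
- by rewrite (aligned_dot ak huw') !mulr0 normr0 ltW.
- rewrite !normrM (ger0_norm (cc_ge0 m k)).
  have h1 := dot_le1' hu1 (yv_unit k); have h2 := dot_le1' (yv_unit k) hw.
  rewrite -[X in _ <= X]mulr1; apply: ler_pM; rewrite ?cc_ge0 ?mulr_ge0 //.
  + exact: cc_le_ms.
  + by rewrite -[X in _ <= X]mulr1; apply: ler_pM.
Qed.

Lemma blA_uw m : `|bl u1 (AA m) w| <= NN * E m ms.
Proof.
rewrite /AA A_bl; apply: le_trans (ler_norm_sum _ _ _) _.
by apply: sum_le_const => k; exact: term_uw.
Qed.

Lemma bl_rep (a b : R) (Q : M2) x y : bl x (a *: Q + b *: (1 - Q)) y = a * bl x Q y + b * (dot x y - bl x Q y).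
Proof. by rewrite blD !blZ blB bl1. Qed.

Lemma main_res : (condP -> supLE_seq X @ \oo --> l1%:M) /\
  (~ condP -> supLE_seq X @ \oo --> l1 *: (u1 *m u1^T) + ms *: (w *m w^T)).
Proof.
have [f hf] := choice spec_ex.
pose al m := (f m).1.1; pose be m := (f m).1.2; pose Q m := (f m).2.
have hS : supLE_seq X = (fun m => (m%:R)^-1 *: (ln (al m) *: Q m + ln (be m) *: (1 - Q m))).
  apply/funext => m; rewrite /supLE_seq AA_eq.
  case: (hf m) => [[QQ QT] EA _ /andP[b0 ba] _].
  by rewrite (logm_rep QQ QT _ b0 EA) //; exact: lt_le_trans ba.
rewrite hS.
have N0 := NN_gt0.
have cal : (fun m => (m%:R)^-1 * ln (al m)) @ \oo --> l1.
  by apply: (@glog _ _ (1/2) NN) => // m; exact: al_bounds (hf m).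
split.
- move=> hc; have [k [vk nk]] := cond_exk hc.
  have d0 := delta_pos nk.
  have cbe : (fun m => (m%:R)^-1 * ln (be m)) @ \oo --> l1.
    apply: (@glog _ _ ((cr u1 (yv k) ^+ 2 / 2) / NN) (2 * (NN * NN / 2))).
      by rewrite !divr_gt0.
    move=> m; apply: (be_bounds (hf m)); first by rewrite divr_gt0.
    exact: (det_bounds vk nk (term_l1 m)).
  apply: (conv_eq hu1 hw huw') => //.
  move=> m; have [[QQ QT] _ _ _ _] := hf m; split => //; split => //.
  by have [] := trQ_prop (hf m).
- move=> hnc; have [k [vk nk]] := ms_att.
  have d0 := delta_pos nk.
  have cbe : (fun m => (m%:R)^-1 * ln (be m)) @ \oo --> ms.
    apply: (@glog _ _ ((cr u1 (yv k) ^+ 2 / 2) / NN) (2 * (NN * NN / 2))).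
      by rewrite !divr_gt0.
    move=> m; apply: (be_bounds (hf m)); first by rewrite divr_gt0.
    exact: (det_bounds vk nk (term_ms m)).
  have mslt := ms_lt hnc.
  set r := expR (ms - l1).
  have r0 : 0 < r := expR_gt0 _.
  have r1 : r < 1 by rewrite /r -expR0 ltr_expR subr_lt0.
  have Ems : forall m, E m ms = E m l1 * r ^+ m.
    by move=> m; rewrite /r -expRM_natl -expRD -mulrDr addrC subrK.
  have rc : (fun m => r ^+ m) @ \oo --> 0 by apply: cvg_expr; rewrite ger0_norm // ltW.
  have ev : \forall m \near \oo, r ^+ m <= 1 / (4 * (NN * NN)).
    have := cvgr_le (0:R) rc (1 / (4 * (NN * NN))).
    by apply; rewrite divr_gt0 // !mulr_gt0.
  have gap : \forall m \near \oo, E m l1 / 4 <= al m - be m.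
    near=> m.
    have /andP[a1 _] := al_bounds (hf m).
    have /andP[_ b2] : (cr u1 (yv k) ^+ 2 / 2 / NN) * E m ms <= be m <= (2 * (NN * NN / 2)) * E m ms.
      apply: (be_bounds (hf m)); first by rewrite divr_gt0.
      exact: (det_bounds vk nk (term_ms m)).
    rewrite Ems in b2; have hr : r ^+ m <= 1 / (4 * (NN * NN)) by near: m; exact: ev.
    have e1 := expR_gt0 (m%:R * l1).
    have hrr : E m l1 * (2 * (NN * NN / 2) * r ^+ m) <= E m l1 * (1/4).
      rewrite ler_pM2l //.
      have -> : 2 * (NN * NN / 2) * r ^+ m = (NN * NN) * r ^+ m by field.
      have Pp : 0 < NN * NN by rewrite mulr_gt0.
      have h4 : NN * NN * r ^+ m <= NN * NN * (1 / (4 * (NN * NN))) by rewrite ler_pM2l //; exact: hr.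
      have e4 : NN * NN * (1 / (4 * (NN * NN))) = 1 / 4 by field; rewrite gt_eqF.
      by rewrite -e4.
    rewrite /al /be; nra.
  have ht : \forall m \near \oo, tr2 (Q m) = 1.
    near=> m; have [_ ] := trQ_prop (hf m); apply.
    have e1 := expR_gt0 (m%:R * l1).
    have g2 : E m l1 / 4 <= (f m).1.1 - (f m).1.2 by near: m; exact: gap.
    apply/eqP => e; rewrite e subrr in g2.
    have h4 : 0 < E m l1 / 4 by rewrite divr_gt0.
    by move: (lt_le_trans h4 g2); rewrite ltxx.
  have cb0 : (fun m => 4 * NN * r ^+ m) @ \oo --> 0.
    by rewrite -(mulr0 (4 * NN)); apply: cvgMl_tmp.
  have c12 : (fun m => bl u1 (Q m) w) @ \oo --> 0.
    apply: (@squeeze_cvgr _ _ _ _ (fun m => - (4 * NN * r ^+ m)) (fun m => 4 * NN * r ^+ m)) => //;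
      last by rewrite -oppr0; exact: (cvgN cb0).
    near=> m; rewrite -ler_norml.
    have g2 : E m l1 / 4 <= (f m).1.1 - (f m).1.2 by near: m; exact: gap.
    have e1 := expR_gt0 (m%:R * l1).
    have hb := blA_uw m; rewrite Ems in hb.
    case: (hf m) => _ EA _ _ _.
    have rel : bl u1 (AA m) w = ((f m).1.1 - (f m).1.2) * bl u1 (Q m) w.
      by rewrite EA bl_rep huw'; rewrite /Q; ring.
    rewrite rel normrM in hb.
    have ab0 : 0 < (f m).1.1 - (f m).1.2 by apply: lt_le_trans g2; rewrite divr_gt0.
    rewrite (gtr0_norm ab0) in hb.
    have q0 := normr_ge0 (bl u1 (Q m) w).
    set q := `|bl u1 (Q m) w| in hb q0 *.
    have : E m l1 * q <= E m l1 * (4 * NN * r ^+ m) by nra.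
    by rewrite ler_pM2l.
  have c22 : (fun m => bl w (Q m) w) @ \oo --> 0.
    apply: (@squeeze_cvgr _ _ _ _ (fun m => 0) (fun m => 4 * NN * r ^+ m)) => //;
      first last.
    - exact: cvg_cst.
    near=> m.
    have g2 : E m l1 / 4 <= (f m).1.1 - (f m).1.2 by near: m; exact: gap.
    have e1 := expR_gt0 (m%:R * l1).
    have /andP[_ hb] := blA_w m; rewrite Ems in hb.
    case: (hf m) => [[QQ QT] EA _ /andP[b0 _] _].
    have rel : bl w (AA m) w = ((f m).1.1 - (f m).1.2) * bl w (Q m) w + (f m).1.2.
      by rewrite EA bl_rep (unitvP hw); rewrite /Q; ring.
    have q0 : 0 <= bl w (Q m) w by exact: bl_psd.
    rewrite rel in hb.
    set q := bl w (Q m) w in hb q0 *.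
    apply/andP; split => //.
    have : E m l1 * q <= E m l1 * (4 * NN * r ^+ m) by nra.
    by rewrite ler_pM2l.
  apply: (conv_ne hu1 hw huw') => //.
  by move=> m; have [[QQ QT] _ _ _ _] := hf m.
Unshelve. all: end_near. Qed.
End Main.
End S.


Unset Implicit Arguments.

Theorem corollary1 (R : realType) (n : nat)
  (X : 'I_n.+1 -> 'M[R]_2) (lam mu : 'I_n.+1 -> R) (u v : 'I_n.+1 -> 'cV[R]_2)
  (w : 'cV[R]_2) :
  (forall i, (X i)^T = X i) ->
  (forall i, unitv (u i) /\ unitv (v i) /\ (u i)^T *m v i = 0) ->
  (forall i, mu i <= lam i) ->
  (forall i, X i = lam i *: (u i *m (u i)^T) + mu i *: (v i *m (v i)^T)) ->
  (forall i, lam i <= lam ord0) ->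
  unitv w -> (u ord0)^T *m w = 0 ->
  let lam1 := lam ord0 in
  let u1 := u ord0 in
  let cond := ~~ unique_eig lam mu lam1 /\
              exists2 z, Vsup X lam1 z & ~~ aligned z u1 in
  (cond -> supLE_seq X @ \oo --> lam1%:M) /\
  (~ cond -> supLE_seq X @ \oo -->
      lam1 *: (u1 *m u1^T) + mu_star lam mu u v ord0 *: (w *m w^T)).
Proof.
move=> hsym horth hmu hX hmax hw huw lam1 u1 cond.
exact: (main_res hsym horth hmu hX hmax hw huw).
Qed.
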